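(* Let $n\ge2$ and $T=\alpha_0I+\alpha_1D+\cdots+\alpha_nD^n\in\mathcal L(\mathcal P_n)$ with $\alpha_0,\dots,\alpha_n\in\mathbb C$, $\alpha_0\ne0$. Then for every $\varepsilon>0$ there exists $C_T(\varepsilon)>0$ such that for every $f\in\mathcal P_n$ of degree at least $2$ with simple roots, $$\tau(f)>C_T(\varepsilon)\ \Longrightarrow\ d_F\Bigl(Z\bigl(S(\alpha_1/\alpha_0)f\bigr),Z(Tf)\Bigr)<\varepsilon.$$
   Context: $\mathcal P_n$ is the complex vector space of polynomials of degree at most $n$, $D$ differentiation, $I$ identity. For $\beta\in\mathbb C$, $S(\beta)$ is the shift $(S(\beta)f)(z)=f(\beta+z)$, so $Z(S(\beta)f)=\{-\beta\}+Z(f)$. $Z(f)$ denotes the roots of $f$ counted with multiplicity; $\deg Tf=\deg f$ for such $T$. For $f$ of degree $\ge2$ with at least two distinct roots, $\tau(f):=\min\{|w-v|:w\in Z(f),\ v\in Z(f')\setminus\{w\}\}$. For multisets $A=\{u_1,\dots,u_m\}$, $B=\{v_1,\dots,v_m\}$ in $\mathbb C$, $d_F(A,B)=\min_{\sigma}\max_k|u_k-v_{\sigma(k)}|$ over permutations $\sigma$ of $\{1,\dots,m\}$. *)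

(* Defs.v *)
(* Complex numbers are modelled by an arbitrary
   numClosedFieldType C (e.g. algC). *)
From HB Require Import structures.
From mathcomp Require Import all_boot all_order all_algebra.
From mathcomp Require Import perm.
Set Implicit Arguments. Unset Strict Implicit. Unset Printing Implicit Defensive.
Import Order.TTheory GRing.Theory Num.Theory.
Local Open Scope ring_scope.

(* Z(f): the roots of f listed with multiplicity (a seq r with
   f = lead_coef f *: \prod_(z <- r) ('X - z)).  Z 0 = [::]. *)
Definition Z (C : numClosedFieldType) (f : {poly C}) : seq C :=
  sval (closed_field_poly_normal f).

Definition Top (C : numClosedFieldType) (n : nat) (alpha : nat -> C)
  (f : {poly C}) : {poly C} :=
  \sum_(k < n.+1) alpha k *: f^`(k).

Definition shift (C : numClosedFieldType) (beta : C) (f : {poly C}) : {poly C} :=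
  f \Po ('X + beta%:P).

Definition seqmin (C : numClosedFieldType) (s : seq C) : C :=
  \big[Num.min/head 0 s]_(x <- s) x.

Definition tau (C : numClosedFieldType) (f : {poly C}) : C :=
  seqmin [seq `|w - v| | w <- Z f, v <- [seq v <- Z f^`() | v != w]].

Definition permdist (C : numClosedFieldType) (A B : seq C) (m : nat)
  (s : 'S_m) : C :=
  \big[Num.max/0]_(k < m) `|nth 0 A k - nth 0 B (s k)|.

Definition dF (C : numClosedFieldType) (A B : seq C) : C :=
  \big[Num.min/@permdist C A B (size A) 1%g]_(s : 'S_(size A))
    @permdist C A B (size A) s.

(* Main.v *)
Require Import Defs.
From HB Require Import structures.
From mathcomp Require Import all_boot all_order all_algebra.
From mathcomp Require Import perm.
Import Order.TTheory GRing.Theory Num.Theory.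
Local Open Scope ring_scope.
Set Implicit Arguments. Unset Strict Implicit.

Lemma minr_ler (C : numClosedFieldType) (x y : C) : Num.min x y <= y.
Proof. by rewrite /Order.min; case: ifP => // /ltW. Qed.

Lemma minr_lel (C : numClosedFieldType) (x y : C) :
  x \is Num.real -> y \is Num.real -> Num.min x y <= x.
Proof.
move=> xr yr; rewrite /Order.min; case: ifP => // /negbT.
by rewrite -real_leNgt.
Qed.

Lemma minr_real (C : numClosedFieldType) (x y : C) :
  x \is Num.real -> y \is Num.real -> Num.min x y \is Num.real.
Proof. by move=> xr yr; rewrite /Order.min; case: ifP. Qed.

Lemma bigmin_le (C : numClosedFieldType) (I : eqType) (r : seq I) (F : I -> C) idx x :
  idx \is Num.real -> (forall i, i \in r -> F i \is Num.real) -> x \in r ->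
  \big[Num.min/idx]_(i <- r) F i <= F x.
Proof.
move=> ir; elim: r => [|y r IH] // Fr; rewrite big_cons inE => /orP [/eqP ->|xr].
  apply: minr_lel; first by apply: Fr; rewrite inE eqxx.
  rewrite big_seq; elim/big_ind: _ => //; first exact: minr_real.
  by move=> i hi; apply: Fr; rewrite inE hi orbT.
apply: le_trans (minr_ler _ _) (IH _ xr).
by move=> i hi; apply: Fr; rewrite inE hi orbT.
Qed.

Lemma bigmax_lt (C : numClosedFieldType) (I : Type) (r : seq I) (F : I -> C) idx e :
  idx < e -> (forall i, F i < e) -> \big[Num.max/idx]_(i <- r) F i < e.
Proof.
move=> ie Fe; elim/big_ind: _ => // x y xe ye.
by rewrite /Order.max; case: ifP.
Qed.

Lemma bigmax_real (C : numClosedFieldType) (I : Type) (r : seq I) (F : I -> C) idx :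
  idx \is Num.real -> (forall i, F i \is Num.real) -> \big[Num.max/idx]_(i <- r) F i \is Num.real.
Proof.
move=> ie Fe; elim/big_ind: _ => // x y xe ye.
by rewrite /Order.max; case: ifP.
Qed.

Lemma Zspec (C : numClosedFieldType) (p : {poly C}) :
  p = lead_coef p *: \prod_(z <- Z p) ('X - z%:P).
Proof. exact: (svalP (closed_field_poly_normal p)). Qed.

Lemma mem_Z (C : numClosedFieldType) (p : {poly C}) x :
  p != 0 -> (x \in Z p) = root p x.
Proof.
move=> p0; rewrite {2}(Zspec p) rootZ ?lead_coef_eq0 //.
by rewrite root_prod_XsubC.
Qed.

Lemma size_Z (C : numClosedFieldType) (p : {poly C}) :
  p != 0 -> size (Z p) = (size p).-1.
Proof.
move=> p0; rewrite {2}(Zspec p) size_scale ?lead_coef_eq0 //.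
by rewrite size_prod_XsubC.
Qed.

Lemma shift_horner (C : numClosedFieldType) w (p : {poly C}) x :
  (shift w p).[x] = p.[x + w].
Proof. by rewrite /shift horner_comp hornerD hornerX hornerC. Qed.

Lemma shift_deriv (C : numClosedFieldType) w (p : {poly C}) :
  (shift w p)^`() = shift w p^`().
Proof. by rewrite /shift deriv_comp derivD derivX derivC addr0 mulr1. Qed.

Lemma shift_derivn (C : numClosedFieldType) w (p : {poly C}) k :
  (shift w p)^`(k) = shift w p^`(k).
Proof. by elim: k => [|k IH]; rewrite ?derivn0 // !derivnS IH shift_deriv. Qed.

Lemma size_shift (C : numClosedFieldType) w (p : {poly C}) :
  size (shift w p) = size p.
Proof. by rewrite /shift size_comp_poly2 // size_XaddC. Qed.

Lemma Top_deriv (C : numClosedFieldType) n (a : nat -> C) f :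
  (Top n a f)^`() = Top n a f^`().
Proof.
rewrite /Top (@raddf_sum _ _ (@deriv C)); apply: eq_bigr => k _.
apply: (etrans (derivZ _ _)). by rewrite -derivSn derivnS.
Qed.

Definition Lf (C : numClosedFieldType) n (a : nat -> C) (b : C) (p : {poly C}) : C :=
  \sum_(k < n.+1) a k * (p^`(k)).[- b].

Lemma Top_horner (C : numClosedFieldType) n (a : nat -> C) b w f :
  (Top n a f).[w - b] = Lf n a b (shift w f).
Proof.
rewrite /Top /Lf horner_sum; apply: eq_bigr => k _.
by rewrite hornerZ shift_derivn shift_horner addrC.
Qed.

Lemma Lf_add (C : numClosedFieldType) n (a : nat -> C) b p q :
  Lf n a b (p + q) = Lf n a b p + Lf n a b q.
Proof.
rewrite /Lf -big_split; apply: eq_bigr => k _.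
by rewrite derivnD hornerD mulrDr.
Qed.

Lemma Lf_scale (C : numClosedFieldType) n (a : nat -> C) b c p :
  Lf n a b (c *: p) = c * Lf n a b p.
Proof.
rewrite /Lf mulr_sumr; apply: eq_bigr => k _.
by rewrite derivnZ hornerZ mulrCA.
Qed.

Lemma Lf0 (C : numClosedFieldType) n (a : nat -> C) b : Lf n a b 0 = 0.
Proof. by rewrite -(scale0r 0) Lf_scale mul0r. Qed.

Lemma poly_wide (C : numClosedFieldType) (p : {poly C}) N :
  (size p <= N)%N -> p = \sum_(i < N) p`_i *: 'X^i.
Proof.
move=> hN; rewrite -poly_def; apply/polyP => i; rewrite coef_poly.
by case: ltnP => // hi; move/leq_sizeP: hN => ->//; exact: ltnW.
Qed.

Lemma Lf_expand (C : numClosedFieldType) n (a : nat -> C) b (p : {poly C}) N :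
  (size p <= N)%N -> Lf n a b p = \sum_(i < N) p`_i * Lf n a b 'X^i.
Proof.
move=> /poly_wide {1}->.
rewrite (big_morph (Lf n a b) (Lf_add n a b) (Lf0 n a b)).
by apply: eq_bigr => i _; rewrite Lf_scale.
Qed.

Lemma Lf1 (C : numClosedFieldType) n (a : nat -> C) b : Lf n a b 1 = a 0%N.
Proof.
rewrite /Lf big_ord_recl big1 ?addr0 /=; first by rewrite -polyC1 hornerC mulr1.
move=> k _; rewrite -polyC1 derivnC /=. by case: (_ == _); rewrite ?derivC ?raddf0 ?horner0 ?hornerC mulr0.
Qed.

Lemma LfX (C : numClosedFieldType) n (a : nat -> C) :
  (1 <= n)%N -> a 0%N != 0 -> Lf n a (a 1%N / a 0%N) 'X = 0.
Proof.
move=> n1 a0; rewrite /Lf; case: n n1 => // n _.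
rewrite big_ord_recl big_ord_recl big1 ?addr0 /=.
  by rewrite derivX hornerX hornerC /bump /= mulr1 mulrN mulrCA mulfV // mulr1 addNr.

move=> k _; by rewrite -!derivnS derivn_poly0 ?horner0 ?mulr0 // size_polyX.


Qed.

Lemma coef_prod_bound (C : numClosedFieldType) (s : seq C) (t : C) p :
  0 <= t -> (forall a, a \in s -> `|a| <= t) ->
  `|(\prod_(a <- s) (1 + a *: 'X))`_p| <= 2%:R ^+ (size s) * t ^+ p.
Proof.
move=> t0; elim: s p => [|a s IH] p hs.
  rewrite big_nil coef1 expr0 mul1r; case: p => [|p] /=.
    by rewrite normr1.
  by rewrite normr0 exprn_ge0.
rewrite big_cons mulrDl mul1r -scalerAl coefD coefZ coefXM.
have ha : `|a| <= t by apply: hs; rewrite inE eqxx.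
have IH' : forall q, `|(\prod_(a <- s) (1 + a *: 'X))`_q| <= 2%:R ^+ (size s) * t ^+ q.
  by move=> q; apply: IH => b hb; apply: hs; rewrite inE hb orbT.
apply: le_trans (ler_normD _ _) _; rewrite /= exprS.
case: p => [|p] /=.
  rewrite mulr0 normr0 addr0 expr0 !mulr1.
  apply: le_trans (IH' 0%N) _; rewrite expr0 mulr1. rewrite -[X in X <= _]mul1r ler_wpM2r ?exprn_ge0 ?ler1n //.
rewrite normrM -mulrA (_ : 2 = 1 + 1) // mulrDl mul1r.
apply: lerD; first exact: IH'.
rewrite exprS mulrCA; apply: ler_pM => //; exact: IH'.
Qed.

Lemma shift_prod (C : numClosedFieldType) (w : C) (s : seq C) :
  (forall c, c \in s -> c != w) ->
  shift w (\prod_(c <- s) ('X - c%:P)) =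
  (\prod_(c <- s) (w - c)) *: \prod_(c <- s) (1 + (w - c)^-1 *: 'X).
Proof.
rewrite /shift; elim: s => [|c s IH] hs.
  by rewrite !big_nil scale1r -polyC1 comp_polyC.
rewrite !big_cons comp_polyM IH; last by move=> d hd; apply: hs; rewrite inE hd orbT.
have hc : w - c != 0 by rewrite subr_eq0 eq_sym hs // inE eqxx.
rewrite comp_polyB comp_polyX comp_polyC. rewrite -scalerA scalerAr scalerAl; congr (_ * _).
rewrite scalerDr scalerA mulfV // scale1r alg_polyC polyCB.
by rewrite [RHS]addrC addrA.
Qed.

Lemma shift_bound (C : numClosedFieldType) (q : {poly C}) w (t : C) N :
  q != 0 -> 0 <= t -> (size (Z q) <= N)%N ->
  (forall c, c \in Z q -> c != w /\ `|(w - c)^-1| <= t) ->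
  forall p, `|(shift w q)`_p| <= `|q.[w]| * 2 ^+ N * t ^+ p.
Proof.
move=> q0 t0 hN hc p.
have hq := Zspec q.
have -> : q.[w] = lead_coef q * \prod_(c <- Z q) (w - c).
  rewrite {1}hq hornerZ horner_prod; congr (_ * _).
  by apply: eq_bigr => c _; rewrite hornerXsubC.
rewrite [in shift w q]hq /shift comp_polyZ -/(shift w _) shift_prod; last by move=> c /hc [].
rewrite !coefZ !normrM -!mulrA; apply: (ler_wpM2l (normr_ge0 _)); apply: (ler_wpM2l (normr_ge0 _)).
rewrite -(big_map (fun c => (w - c)^-1) xpredT (fun a => 1 + a *: 'X)).
apply: le_trans (coef_prod_bound _ t0 _) _.
  move=> a /mapP [c hcs ->]; exact: (hc c hcs).2.
rewrite size_map; apply: ler_wpM2r; first exact: exprn_ge0.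
by apply: ler_weXn2l => //; rewrite ler1n.
Qed.

Lemma deriv_simple (C : numClosedFieldType) (f : {poly C}) w :
  f != 0 -> uniq (Z f) -> w \in Z f -> f^`().[w] != 0.
Proof.
move=> f0 u hw; have hf := Zspec f.
rewrite (perm_big _ (perm_to_rem hw)) big_cons in hf.
rewrite hf derivZ derivM derivXsubC mul1r hornerZ hornerD hornerM hornerXsubC.
rewrite subrr mul0r addr0 mulf_eq0 lead_coef_eq0 negb_or f0 /=.
by rewrite -/(root _ w) root_prod_XsubC mem_rem_uniqF.
Qed.

Lemma tau_le (C : numClosedFieldType) (f : {poly C}) w c :
  w \in Z f -> c \in Z f^`() -> c != w -> tau f <= `|w - c|.
Proof.
move=> hw hc cw; rewrite /tau /seqmin.
set s := [seq _ | _ <- _, _ <- _].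
have hs : `|w - c| \in s.
  by apply: (allpairs_f_dep (fun w v => `|w - v|) hw); rewrite mem_filter cw hc.
have hr : forall x, x \in s -> x \is Num.real.
  by move=> x /allpairsPdep [a [b [_ _ ->]]]; exact: normr_real.
apply: (@bigmin_le C C s id (head 0 s) _ _ _ hs) => //.
by case: s hs hr => //= x s' _ hr; apply: hr; rewrite inE eqxx.
Qed.

Lemma logderiv_bound (C : numClosedFieldType) (s : seq C) x e :
  0 <= e -> (forall r, r \in s -> e <= `|x - r|) ->
  `|(\prod_(r <- s) ('X - r%:P))^`().[x]| * e <=
  (size s)%:R * `|(\prod_(r <- s) ('X - r%:P)).[x]|.
Proof.
move=> e0; elim: s => [|a s IH] hs.
  by rewrite big_nil -polyC1 derivC horner0 normr0 !mul0r.
have ha : e <= `|x - a| by apply: hs; rewrite inE eqxx.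
have IH' : `|(\prod_(r <- s) ('X - r%:P))^`().[x]| * e <=
  (size s)%:R * `|(\prod_(r <- s) ('X - r%:P)).[x]|.
  by apply: IH => r hr; apply: hs; rewrite inE hr orbT.
rewrite big_cons derivM derivXsubC mul1r hornerD !hornerM hornerXsubC /=.
apply: le_trans (ler_wpM2r e0 (ler_normD _ _)) _.
rewrite normrM mulrDl -natr1 mulrDl mul1r addrC.
apply: lerD. 
  rewrite normrM -mulrA. rewrite [X in _ <= X]mulrCA. by apply: (ler_wpM2l (normr_ge0 _)).
by rewrite normrM mulrC; apply: (ler_wpM2r (normr_ge0 _)).
Qed.

Lemma Lf_bound (C : numClosedFieldType) n (a : nat -> C) b (p : {poly C}) M :
  (size p <= n.+1)%N ->
  (forall i, (i < n.+1)%N -> `|p`_i * Lf n a b 'X^i| <= M * `|Lf n a b 'X^i|) ->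
  `|Lf n a b p| <= M * \sum_(i < n.+1) `|Lf n a b 'X^i|.
Proof.
move=> hs hb; rewrite (Lf_expand _ _ _ hs).
apply: le_trans (ler_norm_sum _ _ _) _; rewrite mulr_sumr.
by apply: ler_sum => i _; apply: hb.
Qed.

Lemma Lf_polyC (C : numClosedFieldType) n (a : nat -> C) b c :
  Lf n a b c%:P = c * a 0%N.
Proof. by rewrite -[c%:P]mulr1 -alg_polyC -scalerAl mul1r Lf_scale Lf1. Qed.

Lemma E0_lemma (C : numClosedFieldType) n (a : nat -> C) (F : {poly C}) (d t : C) :
  (1 <= n)%N -> a 0%N != 0 -> 0 <= t -> t <= 1 -> (size F <= n.+1)%N -> F`_0 = 0 ->
  (forall i, `|F`_i.+1| <= `|d| * 2 ^+ n * t ^+ i) ->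
  `|Lf n a (a 1%N / a 0%N) F| <=
    `|d| * 2 ^+ n * t * \sum_(i < n.+1) `|Lf n a (a 1%N / a 0%N) 'X^i|.
Proof.
move=> n1 a0 t0 t1 hs F0 hb; apply: Lf_bound => //.
have M0 : 0 <= `|d| * 2 ^+ n * t by rewrite mulr_ge0 // mulr_ge0 ?exprn_ge0.
move=> -[|[|j]] _.
- by rewrite F0 mul0r normr0 mulr_ge0.
- by rewrite expr1 LfX // mulr0 normr0 mulr0.
rewrite normrM; apply: ler_wpM2r => //.
apply: le_trans (hb j.+1) _; apply: ler_wpM2l.
  by rewrite mulr_ge0 ?exprn_ge0.
by rewrite -[X in _ <= X]expr1; apply: ler_wiXn2l.
Qed.

Lemma E1_lemma (C : numClosedFieldType) n (a : nat -> C) (p : {poly C}) (d t : C) :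
  (1 <= n)%N -> a 0%N != 0 -> 0 <= t -> t <= 1 -> (size p <= n.+1)%N -> p`_0 = d ->
  (forall i, `|p`_i| <= `|d| * 2 ^+ n * t ^+ i) ->
  `|Lf n a (a 1%N / a 0%N) p - a 0%N * d| <=
    `|d| * 2 ^+ n * t * \sum_(i < n.+1) `|Lf n a (a 1%N / a 0%N) 'X^i|.
Proof.
move=> n1 a0 t0 t1 hs p0 hb.
have -> : Lf n a (a 1%N / a 0%N) p - a 0%N * d = Lf n a (a 1%N / a 0%N) (p - d%:P).
  by rewrite Lf_add -polyCN Lf_polyC mulNr [d * _]mulrC.
apply: Lf_bound => //.
  apply: leq_trans (size_polyD _ _) _; rewrite size_polyN geq_max hs /=.
  exact: leq_trans (size_polyC_leq1 _) _.
have M0 : 0 <= `|d| * 2 ^+ n * t by rewrite mulr_ge0 // mulr_ge0 ?exprn_ge0.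
move=> -[|[|j]] _; rewrite coefB coefC /=.
- by rewrite p0 subrr mul0r normr0 mulr_ge0.
- by rewrite expr1 LfX // mulr0 normr0 mulr0.
rewrite subr0 normrM; apply: ler_wpM2r => //.
apply: le_trans (hb j.+2) _; apply: ler_wpM2l.
  by rewrite mulr_ge0 ?exprn_ge0.
by rewrite -[X in _ <= X]expr1; apply: ler_wiXn2l.
Qed.

Lemma size_derivnS (C : numClosedFieldType) (f : {poly C}) k :
  f != 0 -> (size f^`(k.+1) < size f)%N.
Proof.
move=> f0; elim: k => [|k IH]; first by rewrite derivn1 lt_size_deriv.
rewrite derivnS; have [->|h] := eqVneq (f^`(k.+1)) 0.
  by rewrite raddf0 size_poly0 lt0n size_poly_eq0.
exact: ltn_trans (lt_size_deriv h) IH.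
Qed.

Lemma size_Top (C : numClosedFieldType) n (a : nat -> C) f :
  a 0%N != 0 -> size (Top n a f) = size f.
Proof.
move=> a0; have [->|f0] := eqVneq f 0.
  rewrite /Top big1 ?size_poly0 // => k _.
  by rewrite (@derivn_poly0 _ 0) ?scaler0 // size_poly0.
rewrite /Top big_ord_recl derivn0 size_polyDl size_scale //.
elim/big_ind: _ => //.
- by rewrite size_poly0 lt0n size_poly_eq0.
- by move=> x y hx hy; apply: leq_ltn_trans (size_polyD _ _) _; rewrite gtn_max hx hy.
by move=> k _; apply: leq_ltn_trans (size_scale_leq _ _) _; apply: size_derivnS.
Qed.

Lemma pow_trick (C : numClosedFieldType) (M t y e : C) j :
  0 <= M -> 0 <= t -> 0 <= y -> y <= e -> t * e <= 1 ->
  M * t ^+ j.+1 * y ^+ j.+2 <= M * y * (t * e).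
Proof.
move=> M0 t0 y0 ye te.
have ty1 : t * y <= 1 by apply: le_trans te; apply: ler_wpM2l.
have -> : M * t ^+ j.+1 * y ^+ j.+2 = (M * y) * (t * y) ^+ j.+1.
  by rewrite exprMn (exprS y) !mulrA (mulrAC M).
apply: ler_wpM2l; first by rewrite mulr_ge0.
apply: le_trans (_ : t * y <= _); last by apply: ler_wpM2l.
by rewrite -[X in _ <= X]expr1; apply: ler_wiXn2l => //; rewrite mulr_ge0.
Qed.

Lemma ac6 (C : comPzRingType) (x y z w v N : C) :
  x * y * z * (w * v) * N = x * z * (N * y * v * w).
Proof.
rewrite -!mulrA; congr (_ * _); rewrite mulrCA; congr (_ * _).
rewrite [RHS]mulrC -!mulrA; congr (_ * _).
exact: mulrCA.
Qed.

Definition Gs (C : numClosedFieldType) n (a : nat -> C) : C :=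
  \sum_(i < n.+1) `|Lf n a (a 1%N / a 0%N) 'X^i|.

Definition CTd (C : numClosedFieldType) n (a : nat -> C) (eps : C) : C :=
  1 + 2 ^+ n * Gs n a * (n%:R + eps) / (`|a 0%N| * eps)
    + (n.+1)%:R * 2 ^+ n * (2 * eps) + 2 * eps.

Lemma key (C : numClosedFieldType) n (a : nat -> C) eps (f : {poly C}) w :
  (2 <= n)%N -> a 0%N != 0 -> 0 < eps ->
  (2 < size f)%N -> (size f <= n.+1)%N -> uniq (Z f) -> CTd n a eps < tau f ->
  w \in Z f ->
  (exists2 s, s \in Z (Top n a f) & `|w - a 1%N / a 0%N - s| < eps) /\
  (forall w', w' \in Z f -> w' != w -> 2 * eps <= `|w' - w|).
Proof.
move=> n2 a0 e0 sf1 sf2 u hCT hw.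
set b := a 1%N / a 0%N.
have n1 : (1 <= n)%N by apply: ltnW.
have f0 : f != 0 by rewrite -size_poly_eq0 -lt0n (ltn_trans _ sf1).
have fw : f.[w] = 0 by apply/eqP; rewrite -/(root f w) -mem_Z.
have hd : f^`().[w] != 0 := deriv_simple f0 u hw.
set q := f^`() in hd *.
have q0 : q != 0 by apply: contraNneq hd => ->; rewrite horner0.
set d := q.[w] in hd *.
have G0 : 0 <= Gs n a by apply: sumr_ge0 => i _.
have e0' : 0 <= eps := ltW e0.
have a0p : 0 < `|a 0%N| by rewrite normr_gt0.
set K1 := 2 ^+ n * Gs n a * (n%:R + eps) / (`|a 0%N| * eps).
set K2 := (n.+1)%:R * 2 ^+ n * (2 * eps).
have K10 : 0 <= K1.
  by rewrite divr_ge0 ?mulr_ge0 ?exprn_ge0 ?addr_ge0 ?ler0n.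
have K20 : 0 <= K2 by rewrite !mulr_ge0 ?exprn_ge0 ?ler0n.
have e20 : 0 <= 2 * eps by rewrite mulr_ge0.
set CT := CTd n a eps in hCT.
have CTdef : CT = 1 + (K1 + (K2 + 2 * eps)) by rewrite /CT /CTd -!addrA.
have CT1 : 1 <= CT by rewrite CTdef lerDl !addr_ge0.
have CT0 : 0 < CT by apply: lt_le_trans CT1.
have CTK1 : K1 < CT by rewrite CTdef ltr_pwDl ?ltr01 // lerDl addr_ge0.
have CTK2 : K2 < CT.
  by rewrite CTdef ltr_pwDl ?ltr01 // ler_wpDl // lerDl.
have CTe : 2 * eps < CT.
  by rewrite CTdef ltr_pwDl ?ltr01 // ler_wpDl // ler_wpDl.
set t := CT^-1.
have t0 : 0 <= t by rewrite invr_ge0 ltW.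
have t1 : t <= 1 by rewrite invf_le1.
have tK : forall K, 0 <= K -> K < CT -> K * t < 1.
  by move=> K K0 KC; rewrite ltr_pdivrMr // mul1r.
have hc : forall c, c \in Z q -> c != w /\ `|(w - c)^-1| <= t.
  move=> c hcq.
  have cw : c != w.
    apply: contraNneq hd => cw; rewrite /d -cw.
    by move: hcq; rewrite mem_Z // => /rootP.
  split => //; have := tau_le hw hcq cw => htau.
  have CTc : CT < `|w - c| by apply: lt_le_trans htau.
  rewrite normfV lef_pV2 ?posrE ?ltW //; exact: lt_trans CTc.
have hZq : (size (Z q) <= n)%N.
  rewrite size_Z //; apply: leq_trans (leq_pred _) _.
  by rewrite -ltnS; apply: leq_trans (lt_size_deriv f0) _.
have sq : (size (shift w q) <= n.+1)%N.
  by rewrite size_shift ltnW // (leq_trans (lt_size_deriv f0)).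
have B1 := shift_bound q0 t0 hZq hc.
set F := shift w f.
have hF' : F^`() = shift w q by rewrite shift_deriv.
have B2 : forall i, `|F`_i.+1| <= `|d| * 2 ^+ n * t ^+ i.
  move=> i; apply: le_trans (B1 i); rewrite -hF' coef_deriv normrMn mulrS.
  by rewrite lerDl mulrn_wge0.
have F0 : F`_0 = 0 by rewrite -horner_coef0 shift_horner add0r.
have Fq0 : (shift w q)`_0 = d by rewrite -horner_coef0 shift_horner add0r.
have F1 : F`_1 = d by rewrite -Fq0 -hF' coef_deriv.
have sF : (size F <= n.+1)%N by rewrite size_shift.
have E0 := E0_lemma n1 a0 t0 t1 sF F0 B2.
have E1 := E1_lemma n1 a0 t0 t1 sq Fq0 B1.
rewrite -Top_horner in E0.
rewrite -Top_horner /q -Top_deriv in E1.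
set M := `|d| * 2 ^+ n * t * Gs n a in E0 E1.
have M0 : 0 <= M by rewrite !mulr_ge0 ?exprn_ge0.
have d0 : 0 < `|d| by rewrite normr_gt0.
split.
  set P := Top n a f in E0 E1 *; set z0 := w - b in E0 E1 *.
  have P0 : P != 0 by rewrite -size_poly_eq0 size_Top // size_poly_eq0.
  case: (boolP (has (fun s => `|z0 - s| < eps) (Z P))) => [/hasP [s hs hlt] | /hasPn hno].
    by exists s.
  exfalso.
  have hge : forall s, s \in Z P -> eps <= `|z0 - s|.
    by move=> s /hno; rewrite -real_leNgt ?ger0_real.
  have L := logderiv_bound e0' hge.
  have hP := Zspec P.
  have LP : `|P^`().[z0]| * eps <= (size (Z P))%:R * `|P.[z0]|.
    have -> : P^`().[z0] = lead_coef P * (\prod_(z <- Z P) ('X - z%:P))^`().[z0].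
      by rewrite [in LHS]hP derivZ hornerZ.
    have -> : P.[z0] = lead_coef P * (\prod_(z <- Z P) ('X - z%:P)).[z0].
      by rewrite [in LHS]hP hornerZ.
    rewrite !normrM -[X in X <= _]mulrA [X in _ <= X]mulrCA.
    by apply: (ler_wpM2l (normr_ge0 _)).
  have mn : (size (Z P))%:R <= n%:R :> C.
    by rewrite ler_nat size_Z // size_Top // -ltnS (leq_trans _ sf2) // -(ltn_predK sf1).
  have S1 : `|a 0%N| * `|d| * eps <= M * (n%:R + eps).
    have h1 : `|a 0%N| * `|d| <= `|P^`().[z0]| + M.
      rewrite -normrM; have -> : a 0%N * d = P^`().[z0] - (P^`().[z0] - a 0%N * d).
        by rewrite opprB addrC subrK.
      by apply: le_trans (ler_normB _ _) _; apply: lerD.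
    apply: le_trans (ler_wpM2r e0' h1) _.
    rewrite mulrDl mulrDr; apply: lerD => //.
    apply: le_trans LP _; rewrite mulrC; apply: ler_pM => //; exact: normr_ge0.
  have S2 : `|d| * (`|a 0%N| * eps) <= `|d| * (2 ^+ n * Gs n a * (n%:R + eps) * t).
    have <- : `|a 0%N| * `|d| * eps = `|d| * (`|a 0%N| * eps) by rewrite mulrAC mulrC.
    have <- : M * (n%:R + eps) = `|d| * (2 ^+ n * Gs n a * (n%:R + eps) * t).
      by rewrite /M -!mulrA; congr (_ * (_ * _)); rewrite mulrCA (mulrC t).
    exact: S1.
  rewrite ler_pM2l // in S2.
  have := tK K1 K10 CTK1; rewrite /K1 mulrAC ltr_pdivrMr ?mul1r; last first.
    by rewrite mulr_gt0.
  by move=> /(lt_le_trans) /(_ S2); rewrite ltxx.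
move=> w' hw' ww.
rewrite real_leNgt ?ger0_real ?normr_ge0 //; apply/negP => hlt.
set uu := w' - w in hlt *.
have u0 : 0 < `|uu| by rewrite normr_gt0 subr_eq0.
have Fu : F.[uu] = 0.
  by rewrite shift_horner /uu subrK; apply/rootP; rewrite -mem_Z.
set R := F - d *: 'X.
have Ru : R.[uu] = - (d * uu) by rewrite hornerD hornerN hornerZ hornerX Fu sub0r.
have sR : (size R <= n.+1)%N.
  apply: leq_trans (size_polyD _ _) _; rewrite size_polyN geq_max sF /=.
  by apply: leq_trans (size_scale_leq _ _) _; rewrite size_polyX.
have te : t * (2 * eps) <= 1 by rewrite mulrC ltW // tK.
set M2 := `|d| * 2 ^+ n * `|uu| * (t * (2 * eps)).
have Rb : forall i : 'I_n.+1, `|R`_i * uu ^+ i| <= M2.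
  have M20 : 0 <= M2 by rewrite !mulr_ge0 ?exprn_ge0.
  move=> [[|[|j]] hj] /=; rewrite coefB coefZ coefX /=.
  - by rewrite F0 mulr0 subr0 mul0r normr0.
  - by rewrite F1 mulr1 subrr mul0r normr0.
  rewrite mulr0 subr0 normrM normrX.
  apply: le_trans (_ : `|d| * 2 ^+ n * t ^+ j.+1 * `|uu| ^+ j.+2 <= _).
    by apply: ler_wpM2r; [exact: exprn_ge0 | exact: B2].
  by apply: pow_trick => //; [rewrite mulr_ge0 ?exprn_ge0 | exact: ltW].
have S : `|d| * `|uu| <= M2 *+ n.+1.
  rewrite -normrM -normrN -Ru (horner_coef_wide _ sR).
  apply: le_trans (ler_norm_sum _ _ _) _.
  apply: le_trans (ler_sum _ (fun i _ => Rb i)) _.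
  by rewrite sumr_const card_ord.
have e : M2 *+ n.+1 = (`|d| * `|uu|) * (K2 * t) by rewrite -mulr_natr /M2 /K2 ac6.
rewrite e -[X in X <= _]mulr1 ler_pM2l ?mulr_gt0 // in S.
by have := lt_le_trans (tK K2 K20 CTK2) S; rewrite ltxx.
Qed.

Lemma CTd_gt0 (C : numClosedFieldType) n (a : nat -> C) eps :
  a 0%N != 0 -> 0 < eps -> 0 < CTd n a eps.
Proof.
move=> a0 e0; have e0' := ltW e0.
have G0 : 0 <= Gs n a by apply: sumr_ge0 => i _.
rewrite /CTd -!addrA ltr_pwDl ?ltr01 // !addr_ge0 //.
- by rewrite divr_ge0 ?mulr_ge0 ?exprn_ge0 ?addr_ge0 ?ler0n.
- by rewrite !mulr_ge0 ?exprn_ge0 ?ler0n.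
- by rewrite mulr_ge0.
Qed.

Theorem corollary4p4 (C : numClosedFieldType) (n : nat) (alpha : nat -> C) :
  (2 <= n)%N -> alpha 0%N != 0 ->
  forall eps : C, 0 < eps ->
  exists CT : C, 0 < CT /\
    forall f : {poly C},
      (2 < size f)%N -> (size f <= n.+1)%N -> uniq (Z f) ->
      CT < tau f ->
      dF (Z (shift (alpha 1%N / alpha 0%N) f)) (Z (Top n alpha f)) < eps.
Proof.
move=> n2 a0 eps e0; exists (CTd n alpha eps); split; first exact: CTd_gt0.
move=> f sf1 sf2 u hCT.
set b := alpha 1%N / alpha 0%N.
have f0 : f != 0 by rewrite -size_poly_eq0 -lt0n (ltn_trans _ sf1).
have sh0 : shift b f != 0 by rewrite -size_poly_eq0 size_shift size_poly_eq0.
have T0 : Top n alpha f != 0 by rewrite -size_poly_eq0 size_Top // size_poly_eq0.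
set A := Z (shift b f); set B := Z (Top n alpha f).
have sA : size A = (size f).-1 by rewrite /A size_Z // size_shift.
have sB : size B = size A by rewrite /B size_Z // size_Top // sA.
have Aroot : forall x, x \in A -> x + b \in Z f.
  move=> x; rewrite /A !mem_Z // => /rootP; rewrite shift_horner => h.
  exact/rootP.
have uA : uniq A.
  apply: (@leq_size_uniq _ [seq w - b | w <- Z f]).
  - by rewrite map_inj_uniq // => x y /addIr.
  - move=> x /mapP [w hw ->]; rewrite /A mem_Z //; apply/rootP.
    by rewrite shift_horner subrK; apply/rootP; rewrite -mem_Z.
  by rewrite size_map sA size_Z.
pose sg := fun k : 'I_(size A) =>
  odflt k [pick i : 'I_(size A) | `|nth 0 A k - nth 0 B i| < eps].
have hsg : forall k : 'I_(size A), `|nth 0 A k - nth 0 B (sg k)| < eps.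
  move=> k; rewrite /sg; case: pickP => [i hi //|hn] /=; exfalso.
  have hk : nth 0 A k \in A by apply: mem_nth.
  have [[s hs hlt] _] := key n2 a0 e0 sf1 sf2 u hCT (Aroot _ hk).
  rewrite addrK in hlt.
  have hi : (index s B < size A)%N by rewrite -sB index_mem.
  by move: (hn (Ordinal hi)); rewrite /= nth_index // hlt.
have sg_inj : injective sg.
  move=> k l e.
  have hk : nth 0 A k \in A by apply: mem_nth.
  have hl : nth 0 A l \in A by apply: mem_nth.
  have hlt : `|nth 0 A l - nth 0 A k| < 2 * eps.
    apply: le_lt_trans (ler_distD (nth 0 B (sg k)) _ _) _.
    rewrite mulr_natl mulr2n; apply: ltrD; first by rewrite e.
    by rewrite distrC.
  apply: val_inj; apply/eqP; rewrite -(nth_uniq 0 (ltn_ord k) (ltn_ord l) uA).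
  apply/negPn/negP => hne.
  have [_ hsep] := key n2 a0 e0 sf1 sf2 u hCT (Aroot _ hk).
  have hne' : nth 0 A l + b != nth 0 A k + b.
    by apply: contraNneq hne => /addIr ->; exact: eqxx.
  have := hsep _ (Aroot _ hl) hne'.
  rewrite (addrC (nth 0 A k)) addrKA => h.
  by have := le_lt_trans h hlt; rewrite ltxx.
pose sig := perm sg_inj.
have pr : forall s : 'S_(size A), @permdist C A B (size A) s \is Num.real.
  move=> s; rewrite /permdist; apply: bigmax_real; first exact: real0.
  by move=> i; exact: normr_real.
apply: (@le_lt_trans _ _ (@permdist C A B (size A) sig)).
  by rewrite /dF; apply: bigmin_le => //; exact: mem_index_enum.
rewrite /permdist; apply: bigmax_lt => // k; rewrite permE; exact: hsg.
Qed.
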